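(* Let $L$ be a Lie algebra over a field $F$ and $\tilde L=L\otimes_FE$. Let $\Omega$ be a finite family of pairwise commuting elements of $\tilde L$ such that every element of $\Omega$ lies in one of the subspaces $L\otimes e_\pi+\tilde Le_\pi$. Write $\operatorname{ad}^{[k]}(\Omega)=U_k(\operatorname{ad}(\Omega))$ and suppose $\operatorname{ad}^{[3]}(\Omega)=\operatorname{ad}^{[4]}(\Omega)=0$. Then for arbitrary $y_1,y_2\in\tilde L$, \[\operatorname{ad}(y_1\operatorname{ad}^{[2]}(\Omega))\operatorname{ad}(y_2\operatorname{ad}^{[2]}(\Omega))=\operatorname{ad}^{[2]}(\Omega)\operatorname{ad}(y_1)\operatorname{ad}(y_2)\operatorname{ad}^{[2]}(\Omega).\]
   Context: $E$ is the commutative associative $F$-algebra without unit generated by $e_1,e_2,\dots$ with relations $e_i^2=0$; its basis consists of $e_\pi=e_{i_1}\cdots e_{i_r}$ for nonempty finite $\pi=\{i_1<\dots<i_r\}$. $\tilde L=L\otimes_FE$ with $[x\otimes\alpha,y\otimes\beta]=[x,y]\otimes\alpha\beta$, and $\tilde Le_\pi$ denotes $L\otimes Ee_\pi$. $\operatorname{ad}(b):x\mapsto[x,b]$, operators act on the right ($x\,uv$ means apply $u$ then $v$). For a finite family $\Omega'$ of pairwise commuting operators, $U_k(\Omega')=\sum d_1\cdots d_k$ over all $k$-element subsets $\{d_1,\dots,d_k\}$ of $\Omega'$, and $\operatorname{ad}(\Omega)=\{\operatorname{ad}(b)\}_{b\in\Omega}$. *)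

(* Defs.v *)
From HB Require Import structures.
From mathcomp Require Import all_boot all_order all_algebra.
From mathcomp Require Import finmap.
Set Implicit Arguments.
Unset Strict Implicit.
Unset Printing Implicit Defensive.
Import GRing.Theory.
Local Open Scope ring_scope.


Definition lie_algebra (F : fieldType) (L : lmodType F) (br : L -> L -> L) : Prop :=
  [/\ (forall (a : F) (x y z : L), br (a *: x + y) z = a *: br x z + br y z),
      (forall (a : F) (x y z : L), br x (a *: y + z) = a *: br x y + br x z),
      (forall x : L, br x x = 0) &
      (forall x y z : L, br x (br y z) + br y (br z x) + br z (br x y) = 0)].

Section Grassmann.
Variables (F : fieldType) (L : lmodType F) (br : L -> L -> L).

(* An element  sum_pi x_pi (x) e_pi  of  L (x)_F E  is represented by its
   coefficient function pi |-> x_pi  (pi a finite set of indices). *)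
Definition tL := {fset nat} -> L.

(* membership in L~ = L (x) E : no coefficient at the empty set (E has no unit)
   and finitely many nonzero coefficients *)
Definition in_tL (x : tL) : Prop :=
  x fset0 = 0 /\
  exists s : {fset {fset nat}}, forall t, t \notin s -> x t = 0.

(* [x (x) e_p, y (x) e_q] = [x,y] (x) e_p e_q, with e_p e_q = e_(p \cup q) if p,q
   disjoint and 0 otherwise; so the coefficient at t collects all splittings
   t = p \cup (t \ p) with p, t \ p nonempty. *)
Definition tbr (x y : tL) : tL := fun t =>
  \sum_(p <- fpowerset t | (p != fset0) && (p != t)) br (x p) (y (t `\` p)%fset).

Definition ad (b : tL) : tL -> tL := fun x => tbr x b.

(* operators act on the right: product d1 d2 ... dk means apply d1 first *)
Definition opprod (ds : seq (tL -> tL)) : tL -> tL :=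
  foldl (fun f u => u \o f) id ds.

Definition Uk (n : nat) (D : 'I_n -> (tL -> tL)) (k : nat) : tL -> tL :=
  fun x t => \sum_(S : {set 'I_n} | #|S| == k) opprod [seq D i | i <- enum S] x t.

Definition adk (n : nat) (om : 'I_n -> tL) (k : nat) : tL -> tL :=
  Uk (fun i => ad (om i)) k.

(* x lies in L (x) e_pi + L~ e_pi : all its coefficients are supported on
   index sets containing pi *)
Definition in_Le_pi (pi : {fset nat}) (x : tL) : Prop :=
  forall t, ~~ (pi `<=` t)%fset -> x t = 0.

End Grassmann.

(* Main.v *)
Require Import Defs.
From HB Require Import structures.
From mathcomp Require Import all_boot all_order all_algebra.
From mathcomp Require Import finmap.
From mathcomp Require Import boolp.
Import GRing.Theory.
Local Open Scope ring_scope.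


Lemma sum_compl (V : zmodType) (r : {fset nat}) (H : {fset nat} -> V) :
  \sum_(q <- fpowerset r) H q = \sum_(q <- fpowerset r) H (r `\` q)%fset.
Proof.
have inj : {in fpowerset r &, injective (fun q => r `\` q)%fset}.
  move=> a b; rewrite !fpowersetE => ha hb e.
  by rewrite -(fsetDK ha) -(fsetDK hb) e.
rewrite -(big_imfset _ imfset_key H inj) /=.
apply: eq_fbigl => q; apply/idP/imfsetP => [|[q' /= hq' ->]].
  rewrite fpowersetE => hq; exists (r `\` q)%fset; first by rewrite /= fpowersetE fsubsetDl.
  by rewrite fsetDK.
by rewrite fpowersetE fsubsetDl.
Qed.

Lemma fsUD (t p q : {fset nat}) : (q `<=` t `\` p)%fset -> ((p `|` q) `\` p)%fset = q.
Proof.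
move=> h; apply/fsetP=> k; rewrite !inE; have:= fsubsetP h k; rewrite !inE.
by case: (k \in q) => [/(_ isT)/andP[/negbTE -> _]|_]; rewrite ?orbF ?andNb.
Qed.

Lemma fsUD2 (s p : {fset nat}) : (p `<=` s)%fset -> (p `|` (s `\` p))%fset = s.
Proof.
move=> h; apply/fsetP=> k; rewrite !inE; have:= fsubsetP h k.
by case: (k \in p) => /= [/(_ isT) -> // | _].
Qed.

Arguments fsUD {t p q}.
Arguments fsUD2 {s p}.

Lemma sum_split3 (V : zmodType) (t : {fset nat}) (G : {fset nat} -> {fset nat} -> V) :
  \sum_(s <- fpowerset t) \sum_(p <- fpowerset s) G s p =
  \sum_(p <- fpowerset t) \sum_(q <- fpowerset (t `\` p)%fset) G (p `|` q)%fset p.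
Proof.
rewrite (pair_big_dep_cond _ _ _ (fun _ => true) (fun _ _ => true)).
rewrite (pair_big_dep_cond _ _ _ (fun _ => true) (fun _ _ => true)).
match goal with |- _ = \big[_/_]_(w <- enum_fset ?S) _ => set S2 := S end.
have inj : {in S2 &, injective (fun w : {fset nat} * {fset nat} => ((w.1 `|` w.2)%fset, w.1))}.
  move=> [a b] [c d] /imfset2P [a' + [b' + [= -> ->]]] /imfset2P [c' + [d' + [= -> ->]]].
  rewrite !inE /= !andbT !fpowersetE => ha hb hc hd [= e1 e2]; subst c'.
  by rewrite -(fsUD hb) -(fsUD hd) e1.
rewrite -(big_imfset _ imfset_key (fun w => G w.1 w.2) inj) /=.
apply: eq_fbigl => -[s p]; apply/imfset2P/imfsetP.
  move=> [s' + [p' + [= -> ->]]]; rewrite !inE /= !andbT !fpowersetE => hs hp.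
  exists (p', (s' `\` p')%fset); last by rewrite /= fsUD2.
  apply/imfset2P; exists p'; first by rewrite !inE /= andbT fpowersetE (fsubset_trans hp hs).
  exists (s' `\` p')%fset => //; rewrite !inE /= andbT fpowersetE.
  apply/fsubsetP=> k; rewrite !inE => /andP[-> ks]; by rewrite (fsubsetP hs k ks).
move=> [[p' q]] /imfset2P [p'' + [q' + [= -> ->]]] [= -> ->].
rewrite !inE /= !andbT !fpowersetE => hp hq.
exists (p'' `|` q')%fset; first by rewrite !inE /= andbT fpowersetE fsubUset hp (fsubset_trans hq (fsubsetDl _ _)).
by exists p'' => //; rewrite !inE /= andbT fpowersetE fsubsetUl.
Qed.

Section TZ.
Variables (F : fieldType) (L : lmodType F).
HB.instance Definition _ := gen_eqMixin (tL L).
HB.instance Definition _ := gen_choiceMixin (tL L).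
Definition tadd (x y : tL L) : tL L := fun t => x t + y t.
Definition topp (x : tL L) : tL L := fun t => - x t.
Definition tzero : tL L := fun _ => 0.
Lemma taddA : associative tadd. Proof. by move=> x y z; apply/funext=> t; rewrite /tadd addrA. Qed.
Lemma taddC : commutative tadd. Proof. by move=> x y; apply/funext=> t; rewrite /tadd addrC. Qed.
Lemma tadd0 : left_id tzero tadd. Proof. by move=> x; apply/funext=> t; rewrite /tadd /tzero add0r. Qed.
Lemma taddN : left_inverse tzero topp tadd. Proof. by move=> x; apply/funext=> t; rewrite /tadd /tzero /topp addNr. Qed.
HB.instance Definition _ := GRing.isZmodule.Build (tL L) taddA taddC tadd0 taddN.
End TZ.

Section Main.
Variables (F : fieldType) (L : lmodType F) (br : L -> L -> L).
Hypothesis hL : lie_algebra br.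
Local Notation T := (tL L).
Local Notation intl := (@in_tL F L).
Local Notation lep := (@in_Le_pi F L).
Local Notation opp := (@opprod F L).

Lemma evD (x y : T) t : ((x + y : T) : {fset nat} -> L) t = x t + y t. Proof. by []. Qed.
Lemma evN (x : T) t : ((- x : T) : {fset nat} -> L) t = - x t. Proof. by []. Qed.
Lemma ev0 t : ((0 : T) : {fset nat} -> L) t = 0. Proof. by []. Qed.
Lemma evB (x y : T) t : ((x - y : T) : {fset nat} -> L) t = x t - y t. Proof. by []. Qed.
Lemma evS I (r : seq I) P (f : I -> T) t :
  ((\sum_(i <- r | P i) f i : T) : {fset nat} -> L) t = \sum_(i <- r | P i) f i t.
Proof. by apply: (big_morph (fun x : T => x t)). Qed.
Lemma evMn (x : T) n t : ((x *+ n : T) : {fset nat} -> L) t = x t *+ n.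
Proof. by elim: n => [|n IH]; rewrite ?mulr0n // !mulrS evD IH. Qed.

Lemma brDl x y z : br (x + y) z = br x z + br y z.
Proof. by move: hL; rewrite /lie_algebra => -[h _ _ _]; rewrite -(scale1r x) h !scale1r. Qed.
Lemma brDr x y z : br x (y + z) = br x y + br x z.
Proof. by move: hL; rewrite /lie_algebra => -[_ h _ _]; rewrite -(scale1r y) h !scale1r. Qed.
Lemma br0l x : br 0 x = 0.
Proof. by apply: (addrI (br 0 x)); rewrite addr0 -brDl addr0. Qed.
Lemma br0r x : br x 0 = 0.
Proof. by apply: (addrI (br x 0)); rewrite addr0 -brDr addr0. Qed.
Lemma brNl x y : br (- x) y = - br x y.
Proof. by apply/eqP; rewrite -addr_eq0 -brDl addNr br0l. Qed.
Lemma brNr x y : br x (- y) = - br x y.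
Proof. by apply/eqP; rewrite -addr_eq0 -brDr addNr br0r. Qed.
Lemma brBl x y z : br (x - y) z = br x z - br y z.
Proof. by rewrite brDl brNl. Qed.
Lemma brBr x y z : br x (y - z) = br x y - br x z.
Proof. by rewrite brDr brNr. Qed.
Lemma br_suml I (r : seq I) P (f : I -> L) y :
  br (\sum_(i <- r | P i) f i) y = \sum_(i <- r | P i) br (f i) y.
Proof. exact: (big_morph (fun x => br x y) (fun a b => brDl a b y) (br0l y)). Qed.
Lemma br_sumr I (r : seq I) P (f : I -> L) y :
  br y (\sum_(i <- r | P i) f i) = \sum_(i <- r | P i) br y (f i).
Proof. exact: (big_morph (fun x => br y x) (fun a b => brDr y a b) (br0r y)). Qed.
Lemma brC x y : br x y = - br y x.
Proof.
move: hL; rewrite /lie_algebra => -[_ _ h _]; apply/eqP; rewrite -addr_eq0.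
by have := h (x + y); rewrite brDl !brDr !h add0r addr0 => ->.
Qed.
Lemma jacL a b c : br a (br b c) = br (br a b) c - br (br a c) b.
Proof.
move: hL; rewrite /lie_algebra => -[_ _ _ h]; have := h a b c.
rewrite [br b (br c a)]brC [br c a]brC brNl opprK [br c (br a b)]brC => h'.
by rewrite -[LHS]subr0 -h' !opprD opprK !addrA addrN add0r addrC.
Qed.


Definition tb (x y : T) : T := fun t => \sum_(p <- fpowerset t) br (x p) (y (t `\` p)%fset).
Definition nice (x : T) := x fset0 = 0.

Lemma tbrE {x y} : nice x -> nice y -> tbr br x y = tb x y.
Proof.
move=> hx hy; apply/funext => t; rewrite /tbr /tb big_mkcond /=; apply: eq_bigr => p _.
case: ifP => // /negbT; rewrite negb_and !negbK => /orP[/eqP -> | /eqP ->].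
  by rewrite hx br0l.
by rewrite fsetDv hy br0r.
Qed.

Lemma tbr_nice x y : nice (tbr br x y).
Proof. by rewrite /nice /tbr big_mkcond fpowerset0 big_seq_fset1 eqxx. Qed.

Lemma tb_jac x u v : nice x -> nice u -> nice v ->
  tbr br x (tbr br u v) = tbr br (tbr br x u) v - tbr br (tbr br x v) u.
Proof.
move=> hx hu hv.
rewrite (tbrE hx (tbr_nice u v)) (tbrE (tbr_nice x u) hv) (tbrE (tbr_nice x v) hu).
rewrite (tbrE hu hv) (tbrE hx hu) (tbrE hx hv).
apply/funext => t; rewrite evB /tb.
have e1 : \sum_(p <- fpowerset t) br (x p) (tb u v (t `\` p)%fset) =
  \sum_(p <- fpowerset t) \sum_(q <- fpowerset (t `\` p)%fset)
      br (x p) (br (u q) (v ((t `\` p) `\` q)%fset)).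
  by apply: eq_bigr => p _; rewrite /tb br_sumr.
have e2 : forall (a b : T), \sum_(s <- fpowerset t) br (tb x a s) (b (t `\` s)%fset) =
  \sum_(p <- fpowerset t) \sum_(q <- fpowerset (t `\` p)%fset)
      br (br (x p) (a q)) (b ((t `\` p) `\` q)%fset).
  move=> a b.
  transitivity (\sum_(s <- fpowerset t) \sum_(p <- fpowerset s) br (br (x p) (a (s `\` p)%fset)) (b (t `\` s)%fset)).
    by apply: eq_bigr => s _; rewrite /tb br_suml.
  rewrite sum_split3; apply: eq_big_seq => p _; apply: eq_big_seq => q; rewrite fpowersetE => hq.
  by rewrite (fsUD hq) fsetDDl.
rewrite e1 !e2 -sumrB; apply: eq_big_seq => p _.
rewrite [X in _ = _ - X]sum_compl -sumrB; apply: eq_big_seq => q; rewrite fpowersetE => hq.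
rewrite fsetDK // jacL //.
Qed.

Lemma tbrDl x y z : tbr br (x + y) z = tbr br x z + tbr br y z.
Proof. by apply/funext=> t; rewrite /tbr evD -big_split; apply: eq_bigr => p _; rewrite brDl. Qed.
Lemma tbrDr x y z : tbr br x (y + z) = tbr br x y + tbr br x z.
Proof. by apply/funext=> t; rewrite /tbr evD -big_split; apply: eq_bigr => p _; rewrite brDr. Qed.
Lemma tbr0l z : tbr br 0 z = 0.
Proof. by apply/funext=> t; rewrite /tbr big1 // => p _; rewrite br0l. Qed.
Lemma tbr0r z : tbr br z 0 = 0.
Proof. by apply/funext=> t; rewrite /tbr big1 // => p _; rewrite br0r. Qed.
Lemma tbrNl x z : tbr br (- x) z = - tbr br x z.
Proof. by apply/eqP; rewrite -addr_eq0 -tbrDl addNr tbr0l. Qed.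
Lemma tbrNr x z : tbr br z (- x) = - tbr br z x.
Proof. by apply/eqP; rewrite -addr_eq0 -tbrDr addNr tbr0r. Qed.
Lemma tbrBl x y z : tbr br (x - y) z = tbr br x z - tbr br y z.
Proof. by rewrite tbrDl tbrNl. Qed.
Lemma tbrBr x y z : tbr br z (x - y) = tbr br z x - tbr br z y.
Proof. by rewrite tbrDr tbrNr. Qed.
Lemma tbr_suml I (r : seq I) P (f : I -> T) y :
  tbr br (\sum_(i <- r | P i) f i) y = \sum_(i <- r | P i) tbr br (f i) y.
Proof. exact: (big_morph (fun x => tbr br x y) (fun a b => tbrDl a b y) (tbr0l y)). Qed.
Lemma tbr_sumr I (r : seq I) P (f : I -> T) y :
  tbr br y (\sum_(i <- r | P i) f i) = \sum_(i <- r | P i) tbr br y (f i).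
Proof. exact: (big_morph (fun x => tbr br y x) (fun a b => tbrDr y a b) (tbr0r y)). Qed.
Lemma tbrMnl x y m : tbr br (x *+ m) y = tbr br x y *+ m.
Proof. by elim: m => [|m IH]; rewrite ?tbr0l // !mulrS tbrDl IH. Qed.
Lemma tbrMnr x y m : tbr br y (x *+ m) = tbr br y x *+ m.
Proof. by elim: m => [|m IH]; rewrite ?tbr0r // !mulrS tbrDr IH. Qed.

Lemma in_tL0 : intl (0 : T).
Proof. by split=> //; exists fset0. Qed.
Lemma in_tLD x y : intl x -> intl y -> intl (x + y).
Proof.
move=> [x0 [sx hx]] [y0 [sy hy]]; split; first by rewrite evD x0 y0 addr0.
exists (sx `|` sy)%fset => t; rewrite inE negb_or => /andP[tx ty].
by rewrite evD hx // hy // addr0.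
Qed.
Lemma in_tLN x : intl x -> intl (- x).
Proof.
move=> [x0 [sx hx]]; split; first by rewrite evN x0 oppr0.
by exists sx => t tx; rewrite evN hx // oppr0.
Qed.
Lemma in_tLB x y : intl x -> intl y -> intl (x - y).
Proof. by move=> hx hy; apply: in_tLD => //; apply: in_tLN. Qed.
Lemma in_tL_sum I (r : seq I) (P : pred I) (f : I -> T) :
  (forall i, P i -> intl (f i)) -> intl (\sum_(i <- r | P i) f i).
Proof.
move=> h; elim: r => [|a r IH]; first by rewrite big_nil; exact: in_tL0.
rewrite big_cons; case: ifP => // Pa; exact: in_tLD (h a Pa) IH.
Qed.
Lemma in_tLMn x m : intl x -> intl (x *+ m).
Proof. by move=> hx; elim: m => [|m IH]; rewrite ?mulr0n ?mulrS; [exact: in_tL0| exact: in_tLD]. Qed.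

Lemma in_tL_tbr x y : intl x -> intl y -> intl (tbr br x y).
Proof.
move=> [x0 [sx hx]] [y0 [sy hy]]; split; first exact: tbr_nice.
pose U := (\bigcup_(p <- sx) p `|` \bigcup_(q <- sy) q)%fset.
exists (fpowerset U) => t; rewrite fpowersetE => tU.
rewrite /tbr big1_seq // => p /andP[_]; rewrite fpowersetE => pt.
have [px|px] := boolP (p \in sx); last by rewrite hx // br0l.
have [qy|qy] := boolP ((t `\` p)%fset \in sy); last by rewrite hy // br0r.
exfalso; move/negP: tU; apply; rewrite -(fsUD2 pt) fsubUset; apply/andP; split.
  apply: fsubset_trans (fsubsetUl _ _); exact: (bigfcup_sup _ px).
apply: fsubset_trans (fsubsetUr _ _); exact: (bigfcup_sup _ qy).
Qed.

Lemma Le0 pi : lep pi (0 : T).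
Proof. by []. Qed.
Lemma LeD pi x y : lep pi x -> lep pi y -> lep pi (x + y).
Proof. by move=> hx hy t ht; rewrite evD hx // hy // addr0. Qed.
Lemma LeN pi x : lep pi x -> lep pi (- x).
Proof. by move=> hx t ht; rewrite evN hx // oppr0. Qed.
Lemma LeB pi x y : lep pi x -> lep pi y -> lep pi (x - y).
Proof. by move=> hx hy; apply: LeD => //; apply: LeN. Qed.
Lemma Le_sum pi I (r : seq I) (P : pred I) (f : I -> T) :
  (forall i, P i -> lep pi (f i)) -> lep pi (\sum_(i <- r | P i) f i).
Proof.
move=> h; elim: r => [|a r IH]; first by rewrite big_nil.
rewrite big_cons; case: ifP => // Pa; exact: LeD (h a Pa) IH.
Qed.
Lemma Le_tbrl pi x u : lep pi x -> lep pi (tbr br x u).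
Proof.
move=> hx t ht; rewrite /tbr big1_seq // => p /andP[_]; rewrite fpowersetE => pt.
rewrite hx ?br0l //; apply: contra ht => hp; exact: fsubset_trans hp pt.
Qed.
Lemma Le_tbrr pi x u : lep pi u -> lep pi (tbr br x u).
Proof.
move=> hu t ht; rewrite /tbr big1_seq // => p /andP[_]; rewrite fpowersetE => pt.
rewrite hu ?br0r //; apply: contra ht => hp; exact: fsubset_trans hp (fsubsetDl _ _).
Qed.
Lemma Le_kill pi x u : pi != fset0 -> lep pi x -> lep pi u -> tbr br x u = 0.
Proof.
move=> pi0 hx hu; apply/funext => t; rewrite /tbr big1_seq // => p _.
have [px|px] := boolP (pi `<=` p)%fset; last by rewrite hx // br0l.
have [pu|pu] := boolP (pi `<=` t `\` p)%fset; last by rewrite hu // br0r.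
exfalso; case/fset0Pn: pi0 => k kpi.
have := fsubsetP pu k kpi; rewrite !inE (fsubsetP px k kpi) //.
Qed.

Definition good (f : T -> T) :=
  [/\ forall x y, f (x - y) = f x - f y, forall x, intl x -> intl (f x) &
      forall pi x, lep pi x -> lep pi (f x)].

Section GoodTheory.
Variable f : T -> T.
Hypothesis gf : good f.
Lemma goodB x y : f (x - y) = f x - f y. Proof. by case: gf. Qed.
Lemma good0 : f 0 = 0. Proof. by have := goodB 0 0; rewrite !subrr. Qed.
Lemma goodN x : f (- x) = - f x. Proof. by rewrite -sub0r goodB good0 sub0r. Qed.
Lemma goodD x y : f (x + y) = f x + f y. Proof. by rewrite -{1}[y]opprK goodB goodN opprK. Qed.
Lemma good_sumE I (r : seq I) (P : pred I) (g : I -> T) :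
  f (\sum_(i <- r | P i) g i) = \sum_(i <- r | P i) f (g i).
Proof. exact: (big_morph f goodD good0). Qed.
Lemma goodMn x m : f (x *+ m) = f x *+ m.
Proof. by elim: m => [|m IH]; rewrite ?good0 // !mulrS goodD IH. Qed.
Lemma good_in x : intl x -> intl (f x). Proof. by case: gf => _ h _; apply: h. Qed.
Lemma good_Le pi x : lep pi x -> lep pi (f x). Proof. by case: gf => _ _ h; apply: h. Qed.
End GoodTheory.

Lemma good_id : good id. Proof. by split. Qed.
Lemma good_comp f g : good f -> good g -> good (fun x => g (f x)).
Proof.
move=> hf hg; split=> [x y|x hx|pi x hx]; first by rewrite !goodB.
  by do 2 apply: good_in => //.
by do 2 apply: good_Le => //.
Qed.
Lemma good_ad u : intl u -> good (ad br u).
Proof.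
move=> hu; split=> [x y|x hx|pi x hx]; rewrite /ad; first exact: tbrBl.
  exact: in_tL_tbr.
exact: Le_tbrl.
Qed.
Lemma good_sum I (r : seq I) (P : pred I) (g : I -> T -> T) :
  (forall i, good (g i)) -> good (fun x => \sum_(i <- r | P i) g i x).
Proof.
move=> hg; split=> [x y|x hx|pi x hx].
- by rewrite -sumrB; apply: eq_bigr => i _; rewrite goodB.
- by apply: in_tL_sum => i _; apply: good_in.
- by apply: Le_sum => i _; apply: good_Le.
Qed.
Lemma good_ext f g : f =1 g -> good f -> good g.
Proof.
move=> e [h1 h2 h3]; split=> [x y|x|pi x]; rewrite -!e; [exact: h1|exact: h2|exact: h3].
Qed.

Definition step (f : T -> T) (u : T -> T) := u \o f.

Lemma foldl_comp (s : seq (T -> T)) g x : foldl step g s x = opp s (g x).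
Proof.
elim: s g x => [|a s IH] g x //=.
by rewrite IH /opprod /= (IH (a \o id)).
Qed.
Lemma opprod_cons d s x : opp (d :: s) x = opp s (d x).
Proof. by rewrite /opprod /= -/step foldl_comp. Qed.
Lemma opprod_rcons d s x : opp (rcons s d) x = d (opp s x).
Proof. by rewrite /opprod foldl_rcons. Qed.

Lemma good_opprod (s : seq (T -> T)) : (forall d, d \in s -> good d) -> good (opp s).
Proof.
elim: s => [|d s IH] h; first exact: good_id.
apply: good_ext; first by move=> x; rewrite opprod_cons.
apply: good_comp; first by apply: h; rewrite inE eqxx.
by apply: IH => e es; apply: h; rewrite inE es orbT.
Qed.

Lemma UkE n (om : 'I_n -> T) k x :
  adk br om k x = \sum_(S : {set 'I_n} | #|S| == k) opp [seq ad br (om i) | i <- enum S] x.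
Proof. by apply/funext => t; rewrite /adk /Uk evS. Qed.

Lemma U0 n (om : 'I_n -> T) x : adk br om 0 x = x.
Proof.
rewrite UkE (big_pred1 set0) ?enum_set0 // => S; by rewrite /= cards_eq0.
Qed.

Section Split.
Variable n : nat.
Local Notation wid := (widen_ord (leqnSn n)).

Lemma wid_inj : injective wid.
Proof. by move=> i j /(congr1 val) /= /val_inj. Qed.
Lemma ord_max_notin (S : {set 'I_n}) : (ord_max : 'I_n.+1) \notin wid @: S.
Proof.
apply/imsetP => -[i _ /(congr1 val) /= e]; have := ltn_ord i; by rewrite -e ltnn.
Qed.
Lemma enum_memE (A : {set 'I_n.+1}) : enum A = filter (mem A) (enum 'I_n.+1).
Proof. by rewrite enumT. Qed.
Lemma enum_memE' (A : {set 'I_n}) : enum A = filter (mem A) (enum 'I_n).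
Proof. by rewrite enumT. Qed.
Lemma enum_wid (S : {set 'I_n}) : enum (wid @: S) = map wid (enum S).
Proof.
rewrite enum_memE enum_ordSr filter_rcons.
have /negbTE -> : ~~ mem (wid @: S) (ord_max : 'I_n.+1) := ord_max_notin S.
rewrite filter_map enum_memE'; congr map; apply: eq_filter => i /=; by rewrite mem_imset //; apply: wid_inj.
Qed.
Lemma enum_wid_max (S : {set 'I_n}) :
  enum (ord_max |: wid @: S) = rcons (map wid (enum S)) ord_max.
Proof.
rewrite enum_memE enum_ordSr filter_rcons.
have -> : mem (ord_max |: wid @: S) (ord_max : 'I_n.+1) = true by rewrite !inE eqxx.
rewrite filter_map.
rewrite enum_memE'; congr (rcons (map _ _) _); apply: eq_filter => i /=.
rewrite !inE mem_imset; last exact: wid_inj.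
by have -> : (wid i == ord_max) = false by apply/negbTE/eqP => /(congr1 val) /= e; have := ltn_ord i; rewrite e ltnn.
Qed.

Definition pre (S : {set 'I_n.+1}) : {set 'I_n} := [set i | wid i \in S].
Lemma pre_wid (S : {set 'I_n}) : pre (wid @: S) = S.
Proof. by apply/setP => i; rewrite inE mem_imset //; apply: wid_inj. Qed.
Lemma pre_wid_max (S : {set 'I_n}) : pre (ord_max |: wid @: S) = S.
Proof.
apply/setP => i; rewrite !inE mem_imset; last exact: wid_inj.
by have -> : (wid i == ord_max) = false by apply/negbTE/eqP => /(congr1 val) /= e; have := ltn_ord i; rewrite e ltnn.
Qed.
Lemma wid_pre (S : {set 'I_n.+1}) : ord_max \notin S -> wid @: pre S = S.
Proof.
move=> hS; apply/setP => j; apply/imsetP/idP => [[i]|jS]; first by rewrite inE => h ->.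
have jn : (j < n)%N.
  rewrite ltn_neqAle -ltnS ltn_ord andbT; apply: contra hS => /eqP e.
  by have <- : j = ord_max by apply: val_inj.
by exists (Ordinal jn); rewrite ?inE; have -> : wid (Ordinal jn) = j by apply: val_inj.
Qed.
Lemma wid_pre_max (S : {set 'I_n.+1}) : ord_max \in S -> ord_max |: wid @: pre S = S.
Proof.
move=> hS; apply/setP => j; rewrite in_setU1; case: (eqVneq j ord_max) => [->|jm] //=.
apply/imsetP/idP => [[i]|jS]; first by rewrite inE => h ->.
have jn : (j < n)%N.
  rewrite ltn_neqAle -ltnS ltn_ord andbT; apply: contra jm => /eqP e.
  by apply/eqP; apply: val_inj.
by exists (Ordinal jn); rewrite ?inE; have -> : wid (Ordinal jn) = j by apply: val_inj.
Qed.

Lemma Usplit (om : 'I_n.+1 -> T) k x :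
  adk br om k.+1 x = adk br (fun i => om (wid i)) k.+1 x + ad br (om ord_max) (adk br (fun i => om (wid i)) k x).
Proof.
rewrite !UkE (bigID (fun S : {set 'I_n.+1} => ord_max \in S)) /= addrC; congr (_ + _).
  rewrite (reindex_onto (fun S' : {set 'I_n} => wid @: S') pre); last by move=> S /andP[_ hS]; exact: wid_pre.
  apply: eq_big => S'.
    by rewrite pre_wid eqxx andbT (negbTE (ord_max_notin S')) andbT card_imset //; apply: wid_inj.
  by move=> _; rewrite enum_wid -map_comp.
rewrite /ad tbr_suml.
rewrite (reindex_onto (fun S' : {set 'I_n} => ord_max |: wid @: S') pre); last by move=> S /andP[_ hS]; exact: wid_pre_max.
apply: eq_big => S'.
  rewrite pre_wid_max eqxx andbT !inE eqxx andbT cardsU1 (ord_max_notin S') card_imset //; apply: wid_inj.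
by move=> _; rewrite enum_wid_max map_rcons opprod_rcons -map_comp.
Qed.
End Split.

Definition famok n (om : 'I_n -> T) :=
  [/\ forall i, intl (om i), forall i j, tbr br (om i) (om j) = 0 &
      forall i, exists pi : {fset nat}, pi != fset0 /\ lep pi (om i)].
Arguments famok {n}.

Lemma famok_wid n (om : 'I_n.+1 -> T) : famok om -> famok (fun i => om (widen_ord (leqnSn n) i)).
Proof. by case=> h1 h2 h3; split. Qed.

Lemma intl_nice x : intl x -> nice x. Proof. by case. Qed.

Lemma good_adk n (om : 'I_n -> T) k : (forall i, intl (om i)) -> good (adk br om k).
Proof.
move=> h; apply: (@good_ext (fun x => \sum_(S : {set 'I_n} | #|S| == k) opp [seq ad br (om i) | i <- enum S] x)).
  by move=> x; rewrite UkE.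
apply: good_sum => S; apply: good_opprod => d /mapP [i _ ->]; exact: good_ad.
Qed.

Lemma ad_sum w I (r : seq I) (P : pred I) (f : I -> T) :
  ad br w (\sum_(i <- r | P i) f i) = \sum_(i <- r | P i) ad br w (f i).
Proof. exact: tbr_suml. Qed.

Lemma ad_comm u v x : nice u -> nice v -> nice x -> tbr br u v = 0 ->
  ad br v (ad br u x) = ad br u (ad br v x).
Proof. by move=> hu hv hx e; apply/eqP; rewrite -subr_eq0 /ad -tb_jac // e tbr0r. Qed.

Lemma kill (w : T) f x : (exists pi, pi != fset0 /\ lep pi w) -> good f ->
  ad br w (f (ad br w x)) = 0.
Proof.
move=> [pi [pi0 hw]] gf; rewrite /ad; apply: (Le_kill _ _ _ pi0) => //.
by apply: (good_Le _ gf); exact: Le_tbrr.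
Qed.

Lemma U_comm n (om : 'I_n -> T) w k x : famok om -> intl w ->
  (forall i, tbr br w (om i) = 0) -> intl x ->
  adk br om k (ad br w x) = ad br w (adk br om k x).
move=> [h1 _ _] hw hwo hx; rewrite !UkE ad_sum; apply: eq_bigr => S _.
move: x hx; elim: (enum S) => [|j s0 IH] x0 hx0 //=.
rewrite !opprod_cons ad_comm //; try exact: intl_nice.
by apply: IH; apply: in_tL_tbr.
Qed.

Lemma Ubase0 (om : 'I_0 -> T) k x : adk br om k.+1 x = 0.
Proof.
rewrite UkE big_pred0 // => S.
have -> : #|S| = 0%N by apply/eqP; rewrite -leqn0; apply: leq_trans (max_card _) _; rewrite card_ord.
by [].
Qed.

Lemma Uprod n (om : 'I_n -> T) a b x : famok om -> intl x ->
  adk br om b (adk br om a x) = adk br om (a + b) x *+ 'C(a + b, a).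
Proof.
elim: n om a b x => [|n IH] om a b x hom hx.
  case: a => [|a]; first by rewrite U0 add0n bin0 mulr1n.
  case: b => [|b]; first by rewrite U0 addn0 binn mulr1n.
  by rewrite Ubase0 addSn Ubase0 mul0rn.
case: a => [|a]; first by rewrite U0 add0n bin0 mulr1n.
case: b => [|b]; first by rewrite U0 addn0 binn mulr1n.
have [h1 h2 h3] := hom.
have hom0 := famok_wid _ _ hom.
have h10 : forall i, intl (om (widen_ord (leqnSn n) i)) by move=> i; apply: h1.
set om0 := (fun i => om (widen_ord (leqnSn n) i)) in hom0 h10 *.
have gA : good (ad br (om ord_max)) by apply: good_ad.
have g0 : forall k, good (adk br om0 k) by move=> k; apply: good_adk.
have g1 : forall k, good (adk br om k) by move=> k; apply: good_adk.
have inA : forall k z, intl z -> intl (adk br om0 k z) by move=> k z hz; apply: good_in.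
rewrite !addSn !addnS [in RHS]Usplit -/om0.
rewrite [adk br om a.+1 x]Usplit goodD // [in LHS]Usplit [in LHS]Usplit -/om0.
rewrite (kill _ (adk br om0 b) _ (h3 _) (g0 b)) addr0.
rewrite U_comm //; try (by apply: inA); try (by move=> i; apply: h2).
rewrite (IH om0 a.+1 b.+1 x hom0 hx) (IH om0 a.+1 b x hom0 hx) (IH om0 a b.+1 x hom0 hx).
rewrite !addSn !addnS binS !(goodMn _ gA).
by rewrite mulrnDl -addrA; congr (_ + _); rewrite mulrnDr.
Qed.

Definition sgn (j : nat) (v : T) : T := if odd j then - v else v.
Lemma sgnD j a b : sgn j (a + b) = sgn j a + sgn j b.
Proof. by rewrite /sgn; case: (odd j); rewrite ?opprD. Qed.
Lemma sgn0 j : sgn j 0 = 0.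
Proof. by rewrite /sgn; case: (odd j); rewrite ?oppr0. Qed.
Lemma sgnS j v : sgn j.+1 v = - sgn j v.
Proof. by rewrite /sgn /=; case: (odd j); rewrite ?opprK. Qed.
Lemma good_sgn f j v : good f -> f (sgn j v) = sgn j (f v).
Proof. by move=> gf; rewrite /sgn; case: (odd j); rewrite ?goodN. Qed.

Lemma Usplit' n (om : 'I_n.+1 -> T) k z :
  adk br om k z = adk br (fun i => om (widen_ord (leqnSn n) i)) k z +
    (if k is k'.+1 then ad br (om ord_max) (adk br (fun i => om (widen_ord (leqnSn n) i)) k' z) else 0).
Proof. by case: k => [|k]; rewrite ?U0 ?addr0 // Usplit. Qed.

Lemma Uad n (om : 'I_n -> T) k x y : famok om -> intl x -> intl y ->
  tbr br x (adk br om k y) =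
  \sum_(0 <= j < k.+1) sgn j (adk br om (k - j) (tbr br (adk br om j x) y)).
Proof.
elim: n om k x y => [|n IH] om k x y hom hx hy.
  have [h1 _ _] := hom.
  case: k => [|k]; first by rewrite big_nat1 !U0.
  rewrite Ubase0 tbr0r big_nat_recl // subn0 Ubase0 sgn0 add0r big1 // => i _.
  by rewrite Ubase0 tbr0l (good0 _ (good_adk _ _ _ h1)) sgn0.
case: k => [|k]; first by rewrite big_nat1 !U0.
have [h1 h2 h3] := hom.
have hom0 := famok_wid _ _ hom.
have h10 : forall i, intl (om (widen_ord (leqnSn n) i)) by move=> i; apply: h1.
set om0 := (fun i => om (widen_ord (leqnSn n) i)) in hom0 h10 *.
have gA : good (ad br (om ord_max)) by apply: good_ad.
have g0 : forall k, good (adk br om0 k) by move=> k'; apply: good_adk.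
have inA : forall k z, intl z -> intl (adk br om0 k z) by move=> k' z hz; apply: good_in.
have hw := h1 ord_max.
have J : forall w, intl w -> tbr br x (ad br (om ord_max) w) =
    ad br (om ord_max) (tbr br x w) - tbr br (ad br (om ord_max) x) w.
  by move=> w hw'; rewrite /ad tb_jac //; apply: intl_nice.
rewrite Usplit -/om0 tbrDr J; last exact: inA.
have hAx : intl (ad br (om ord_max) x) by apply: in_tL_tbr.
rewrite (IH om0 k.+1 x y) // (IH om0 k x y) // (IH om0 k _ y hom0 hAx hy).
have E : forall j, sgn j (adk br om (k.+1 - j) (tbr br (adk br om j x) y)) =
   sgn j (adk br om0 (k.+1 - j) (tbr br (adk br om0 j x) y)) +
   sgn j (if (k.+1 - j)%N is m.+1 then ad br (om ord_max) (adk br om0 m (tbr br (adk br om0 j x) y)) else 0) +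
   sgn j (adk br om0 (k.+1 - j) (tbr br (if j is i.+1 then ad br (om ord_max) (adk br om0 i x) else 0) y)).
  move=> j.
  rewrite [adk br om j x]Usplit' -/om0 tbrDl (goodD _ (good_adk _ _ _ h1)).
  rewrite [adk br om _ (tbr br (adk br om0 j x) y)]Usplit' -/om0.
  rewrite [adk br om _ (tbr br _ y)]Usplit' -/om0.
  have -> : (if (k.+1 - j)%N is m.+1 then ad br (om ord_max) (adk br om0 m
        (tbr br (if j is i.+1 then ad br (om ord_max) (adk br om0 i x) else 0) y)) else 0) = 0.
    case: (k.+1 - j)%N => [|m] //; case: j => [|i] /=; first by rewrite tbr0l (good0 _ (g0 m)) /ad tbr0l.
    have := kill (om ord_max) (fun z => adk br om0 m (tbr br z y)) (adk br om0 i x) (h3 _) (good_comp _ _ (good_ad _ hy) (g0 m)). exact.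
  by rewrite addr0 !sgnD ?addrA.
rewrite (eq_bigr _ (fun j _ => E j)) !big_split /=.
rewrite addrA; congr (_ + _ + _).
- rewrite [in RHS]big_nat_recr //= subnn sgn0 addr0 (good_sumE _ gA); apply: eq_big_nat => j /andP[_ hj].
  by rewrite subSn // (good_sgn _ _ _ gA).
- rewrite [in RHS]big_nat_recl // tbr0l (good0 _ (g0 _)) sgn0 add0r -sumrN; apply: eq_big_nat => i _.
  rewrite subSS sgnS -U_comm //; try (by move=> j; apply: h2); exact: h10.
Qed.

Lemma main n (om : 'I_n -> T) : famok om ->
  (forall z, intl z -> adk br om 3 z = 0) -> (forall z, intl z -> adk br om 4 z = 0) ->
  forall y1 y2, intl y1 -> intl y2 -> forall z, intl z ->
  ad br (adk br om 2 y2) (ad br (adk br om 2 y1) z) =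
  adk br om 2 (ad br y2 (ad br y1 (adk br om 2 z))).
Proof.
move=> hom H3 H4 y1 y2 hy1 hy2 z hz.
have [h1 h2 h3] := hom.
have g k : good (adk br om k) by apply: good_adk.
have iU k x : intl x -> intl (adk br om k x) by move=> hx; apply: good_in.
have iB x y : intl x -> intl y -> intl (tbr br x y) by apply: in_tL_tbr.
have P0 x y : intl x -> intl y -> tbr br x (adk br om 2 y) =
    adk br om 2 (tbr br x y) - adk br om 1 (tbr br (adk br om 1 x) y) + tbr br (adk br om 2 x) y.
  move=> hx hy; rewrite Uad // !big_nat_recr //= big_geq // add0r /sgn /=.
  by rewrite !U0.
have P1 x y : intl x -> intl y ->
    adk br om 2 (tbr br (adk br om 1 x) y) = adk br om 1 (tbr br (adk br om 2 x) y).
  move=> hx hy; have := Uad _ _ 3 x y hom hx hy.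
  rewrite H3 // tbr0r !big_nat_recr //= big_geq // add0r /sgn /= !subSS !subn0 !U0.
  rewrite (H3 _ (iB _ _ hx hy)) (H3 _ hx) tbr0l subr0 sub0r => /eqP.
  by rewrite eq_sym addrC subr_eq0 => /eqP ->.
have P2 x y : intl x -> intl y -> adk br om 2 (tbr br (adk br om 2 x) y) = 0.
  move=> hx hy; have := Uad _ _ 4 x y hom hx hy.
  rewrite H4 // tbr0r !big_nat_recr //= big_geq // add0r /sgn /= !subSS !subn0 !U0.
  rewrite (H4 _ (iB _ _ hx hy)) (H3 _ (iB _ _ (iU _ _ hx) hy)) (H3 _ hx) (H4 _ hx).
  by rewrite !tbr0l (good0 _ (g 1%N)) !subr0 !addr0 add0r => <-.
have Q11 w : intl w -> adk br om 1 (adk br om 1 w) = adk br om 2 w *+ 2.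
  by move=> hw; rewrite Uprod.
have Q12 w : intl w -> adk br om 2 (adk br om 1 w) = 0.
  by move=> hw; rewrite Uprod // H3 // mul0rn.
have Q21 w : intl w -> adk br om 1 (adk br om 2 w) = 0.
  by move=> hw; rewrite Uprod // H3 // mul0rn.
have Q22 w : intl w -> adk br om 2 (adk br om 2 w) = 0.
  by move=> hw; rewrite Uprod // H4 // mul0rn.
have iz2 := iU 2%N z hz.
have ia : intl (tbr br (adk br om 2 z) y1) by apply: iB.
have hw : tbr br z (adk br om 2 y1) = adk br om 2 (tbr br z y1) -
    adk br om 1 (tbr br (adk br om 1 z) y1) + tbr br (adk br om 2 z) y1 by apply: P0.
have hU1w : adk br om 1 (tbr br z (adk br om 2 y1)) = - adk br om 1 (tbr br (adk br om 2 z) y1).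
  rewrite hw (goodD _ (g 1%N)) (goodB _ (g 1%N)) Q21; last by apply: iB.
  rewrite Q11; last by apply: iB => //; apply: iU.
  by rewrite P1 // mulr2n sub0r opprD addrNK.
have hU2w : adk br om 2 (tbr br z (adk br om 2 y1)) = 0.
  rewrite hw (goodD _ (g 2%N)) (goodB _ (g 2%N)) Q22; last by apply: iB.
  rewrite Q12; last by apply: iB => //; apply: iU.
  by rewrite P2 // subrr addr0.
rewrite /ad P0 //; last by apply: iB => //; apply: iU.
rewrite hU1w hU2w tbr0l addr0 tbrNl (goodN _ (g 1%N)) opprK.
rewrite hw !tbrDl tbrNl !(goodD _ (g 2%N)) (goodN _ (g 2%N)) P2 //; last by apply: iB.
rewrite (P1 (tbr br (adk br om 1 z) y1)) //; last by apply: iB => //; apply: iU.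
by rewrite P1 // add0r addrAC addNr add0r.
Qed.

End Main.

Theorem lemma14 (F : fieldType) (L : lmodType F) (br : L -> L -> L)
  (n : nat) (om : 'I_n -> tL L) :
  lie_algebra br ->
  (forall i, in_tL (om i)) ->
  (forall i j, tbr br (om i) (om j) = (fun _ => 0)) ->
  (forall i, exists pi : {fset nat}, pi != fset0 /\ in_Le_pi pi (om i)) ->
  (forall z, in_tL z -> adk br om 3 z = (fun _ => 0)) ->
  (forall z, in_tL z -> adk br om 4 z = (fun _ => 0)) ->
  forall y1 y2 : tL L, in_tL y1 -> in_tL y2 ->
  forall z : tL L, in_tL z ->
    ad br (adk br om 2 y2) (ad br (adk br om 2 y1) z) =
    adk br om 2 (ad br y2 (ad br y1 (adk br om 2 z))).
Proof.
move=> hL h1 h2 h3 H3 H4 y1 y2 hy1 hy2 z hz.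
by apply: main => //; split.
Qed.
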